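(* Let $a>0$. The polynomial equation $27x^3(a-x)-(3a-x)^3=0$ in the real unknown $x$ has a positive real root if and only if $a\le a_0$ or $a\ge a_c$, where $a_0=\frac{2}{27}\,(26+15\sqrt3)^{-1}$ and $a_c=\frac{2(26+15\sqrt3)}{27}$. *)

(* Defs.v *)
From Stdlib Require Import Reals.
Open Scope R_scope.

Definition a_0 : R := (2 / 27) * / (26 + 15 * sqrt 3).
Definition a_c : R := 2 * (26 + 15 * sqrt 3) / 27.

(* Main.v *)
Require Import Defs.
From Stdlib Require Import Reals Lra Psatz.
Open Scope R_scope.

Lemma s_facts : sqrt 3 * sqrt 3 = 3 /\ 0 < sqrt 3.
Proof. split; [apply sqrt_sqrt; lra | apply sqrt_lt_R0; lra]. Qed.

Lemma s_bounds : 1.732 < sqrt 3 < 1.7321.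
Proof.
  destruct s_facts as [H1 H2]. split; nra.
Qed.

Lemma ac_eq : a_c = (52 + 30 * sqrt 3) / 27.
Proof. unfold a_c. field. Qed.

Lemma a0_eq : a_0 = (52 - 30 * sqrt 3) / 27.
Proof.
  destruct s_facts as [H1 H2]. unfold a_0.
  assert (Hk : 26 + 15 * sqrt 3 <> 0) by lra.
  assert (Hm : (26 + 15 * sqrt 3) * (26 - 15 * sqrt 3) = 1) by nra.
  replace (/ (26 + 15 * sqrt 3)) with (26 - 15 * sqrt 3).
  - field.
  - field_simplify_eq; [lra | exact Hk].
Qed.

Definition h (a t : R) := 27 * a * t ^ 3 * (1 - t) - (3 - t) ^ 3.

Lemma Pc_fact t : let s := sqrt 3 in
  h a_c t = - (t - (6 - 3*s))^2 * ((52+30*s)*t^2 + (31+18*s)*t + (21+12*s)).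
Proof.
  destruct s_facts as [H1 H2]. simpl. unfold h. rewrite ac_eq.
  field_simplify. replace (sqrt 3 ^ 2) with 3 by (simpl; lra).
  replace (sqrt 3 ^ 3) with (3 * sqrt 3) by (simpl; nra).
  ring.
Qed.

Lemma P0_fact t : let s := sqrt 3 in
  h a_0 t = - (t - (6 + 3*s))^2 * ((52-30*s)*t^2 + (31-18*s)*t + (21-12*s)).
Proof.
  destruct s_facts as [H1 H2]. simpl. unfold h. rewrite a0_eq.
  field_simplify. replace (sqrt 3 ^ 2) with 3 by (simpl; lra).
  replace (sqrt 3 ^ 3) with (3 * sqrt 3) by (simpl; nra).
  ring.
Qed.

Lemma q0_pos t : 0 < (52-30*sqrt 3)*t^2 + (31-18*sqrt 3)*t + (21-12*sqrt 3).
Proof.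
  destruct s_facts as [H1 H2]. set (s := sqrt 3) in *.
  assert (HB : 0 < 52 - 30*s) by (pose proof s_bounds; unfold s; lra).
  assert (Hd : 0 < 4*(52-30*s)*(21-12*s) - (31-18*s)^2).
  { assert (E : 4*(52-30*s)*(21-12*s) - (31-18*s)^2 = 6755 - 3900*s) by (simpl; nra).
    rewrite E. assert (0 < (6755 - 3900*s)*(6755+3900*s)) by nra. nra. }
  assert (E : 4*(52-30*s) * ((52-30*s)*t^2 + (31-18*s)*t + (21-12*s))
     = (2*(52-30*s)*t + (31-18*s))^2 + (4*(52-30*s)*(21-12*s) - (31-18*s)^2)) by ring.
  assert (0 < 4*(52-30*s) * ((52-30*s)*t^2 + (31-18*s)*t + (21-12*s))).
  { rewrite E. pose proof (pow2_ge_0 (2*(52-30*s)*t + (31-18*s))). lra. }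
  nra.
Qed.

Lemma qc_pos t : 0 <= t -> 0 < (52+30*sqrt 3)*t^2 + (31+18*sqrt 3)*t + (21+12*sqrt 3).
Proof.
  intros. destruct s_facts as [H1 H2]. nra.
Qed.

Lemma f_scale a t : 0 < a ->
  27 * (a*t) ^ 3 * (a - a*t) - (3 * a - a*t) ^ 3 = a^3 * h a t.
Proof. intros. unfold h. ring. Qed.

Theorem mainTheorem5 (a : R) (ha : 0 < a) :
  (exists x : R, 0 < x /\ 27 * x ^ 3 * (a - x) - (3 * a - x) ^ 3 = 0)
  <-> (a <= a_0 \/ a >= a_c).
Proof.
  split.
  - intros [x [Hx Hf]].
    set (t := x / a).
    assert (Ht : x = a * t) by (unfold t; field; lra).
    assert (Htp : 0 < t) by (unfold t; apply Rdiv_lt_0_compat; lra).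
    rewrite Ht, f_scale in Hf by lra.
    assert (Hh : h a t = 0).
    { assert (0 < a^3) by (apply pow_lt; lra).
      destruct (Rmult_integral _ _ Hf); [lra|assumption]. }
    destruct (Rlt_or_le t 1) as [Ht1|Ht1].
    + right. apply Rnot_lt_ge. intro Hlt.
      pose proof (Pc_fact t) as E. simpl in E.
      pose proof (qc_pos t ltac:(lra)).
      assert (h a_c t <= 0).
      { rewrite E. pose proof (pow2_ge_0 (t - (6 - 3 * sqrt 3))).
        assert (0 <= (t - (6 - 3 * sqrt 3)) ^ 2 *
          ((52 + 30 * sqrt 3) * t ^ 2 + (31 + 18 * sqrt 3) * t + (21 + 12 * sqrt 3)))
          by (apply Rmult_le_pos; lra). lra. }
      assert (h a t - h a_c t = 27 * (a - a_c) * (t^3 * (1 - t))) by (unfold h; ring).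
      assert (0 < t^3 * (1-t)) by (apply Rmult_lt_0_compat; [apply pow_lt|]; lra).
      assert (27 * (a - a_c) * (t^3 * (1 - t)) < 0).
      { assert (0 < 27 * (a_c - a) * (t^3 * (1 - t))) by
          (apply Rmult_lt_0_compat; [lra|assumption]). lra. }
      lra.
    + left. apply Rnot_lt_le. intro Hlt.
      pose proof (P0_fact t) as E. simpl in E.
      pose proof (q0_pos t).
      assert (h a_0 t <= 0).
      { rewrite E. pose proof (pow2_ge_0 (t - (6 + 3 * sqrt 3))).
        assert (0 <= (t - (6 + 3 * sqrt 3)) ^ 2 *
          ((52 - 30 * sqrt 3) * t ^ 2 + (31 - 18 * sqrt 3) * t + (21 - 12 * sqrt 3)))
          by (apply Rmult_le_pos; lra). lra. }
      assert (h a t - h a_0 t = 27 * (a - a_0) * (t^3 * (1 - t))) by (unfold h; ring).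
      destruct (Req_dec t 1) as [E1|E1].
      * subst t. rewrite E1 in Hh. unfold h in Hh. lra.
      * assert (0 < t^3 * (t-1)) by (apply Rmult_lt_0_compat; [apply pow_lt|]; lra).
        assert (0 < 27 * (a - a_0) * (t^3 * (t - 1))) by
          (apply Rmult_lt_0_compat; [lra|assumption]).
        assert (27 * (a - a_0) * (t^3 * (1 - t)) = - (27 * (a - a_0) * (t^3 * (t - 1)))) by ring.
        lra.
  - set (f := fun x => 27 * x ^ 3 * (a - x) - (3 * a - x) ^ 3).
    assert (Hc : continuity f) by (unfold f; reg).
    destruct s_facts as [H1 H2]. pose proof s_bounds.
    intros [Ha|Ha].
    + set (t0 := 6 + 3 * sqrt 3).
      assert (Hf3 : f (3*a) < 0).
      { unfold f. assert (0 < a^4) by (apply pow_lt; lra).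
        replace (27 * (3 * a) ^ 3 * (a - 3 * a) - (3 * a - 3 * a) ^ 3) with (-1458 * a^4) by ring.
        lra. }
      assert (Hft : 0 <= f (a * t0)).
      { unfold f. rewrite f_scale by lra.
        pose proof (P0_fact t0) as E. simpl in E. fold t0 in E.
        replace (t0 - t0) with 0 in E by ring.
        assert (h a t0 - h a_0 t0 = 27 * (a - a_0) * (t0^3 * (1 - t0))) by (unfold h; ring).
        assert (0 < t0^3 * (t0-1)) by (apply Rmult_lt_0_compat; [apply pow_lt|]; unfold t0; lra).
        assert (0 <= 27 * (a_0 - a) * (t0^3 * (t0 - 1))) by
          (apply Rmult_le_pos; lra).
        assert (0 <= h a t0) by nra.
        apply Rmult_le_pos; [apply pow_le; lra | lra]. }
      destruct (IVT_cor f (3*a) (a*t0) Hc) as [z [[Hz1 Hz2] Hz]].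
      * unfold t0; nra.
      * nra.
      * exists z. split; [lra|exact Hz].
    + set (t1 := 6 - 3 * sqrt 3).
      assert (Hf0 : f 0 < 0).
      { unfold f. assert (0 < a^3) by (apply pow_lt; lra).
        replace (27 * 0 ^ 3 * (a - 0) - (3 * a - 0) ^ 3) with (-27 * a^3) by ring. lra. }
      assert (Hft : 0 <= f (a * t1)).
      { unfold f. rewrite f_scale by lra.
        pose proof (Pc_fact t1) as E. simpl in E. fold t1 in E.
        replace (t1 - t1) with 0 in E by ring.
        assert (h a t1 - h a_c t1 = 27 * (a - a_c) * (t1^3 * (1 - t1))) by (unfold h; ring).
        assert (0 < t1^3 * (1-t1)) by (apply Rmult_lt_0_compat; [apply pow_lt|]; unfold t1; lra).
        assert (0 <= 27 * (a - a_c) * (t1^3 * (1 - t1))) by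
          (apply Rmult_le_pos; lra).
        assert (0 <= h a t1) by nra.
        apply Rmult_le_pos; [apply pow_le; lra | lra]. }
      destruct (IVT_cor f 0 (a*t1) Hc) as [z [[Hz1 Hz2] Hz]].
      * unfold t1; nra.
      * nra.
      * exists z. split; [|exact Hz].
        destruct Hz1 as [Hz1|Hz1]; [exact Hz1|]. subst z. lra.
Qed.
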